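(* Every $d$-degenerate graph $G$ satisfies $\operatorname{tww}(G)\leq\sqrt{2d|V(G)|}+2d$.
   Context: All graphs are finite and simple. A graph $G$ is $d$-degenerate if there is a linear order $v_1,\dots,v_n$ of $V(G)$ such that each $v_i$ has at most $d$ neighbors among $v_1,\dots,v_{i-1}$. A trigraph is a graph whose edges are each colored red or black; a graph is viewed as a trigraph with all edges black. The red degree of a vertex is the number of red edges incident to it. For a partition $\mathcal{P}$ of $V(G)$, the quotient trigraph $G/\mathcal{P}$ has vertex set $\mathcal{P}$; two distinct parts $U,W$ are joined by a black edge if every pair $\{u,w\}$ with $u\in U,w\in W$ is a black edge of $G$, are non-adjacent if no such pair is an edge of $G$, and are joined by a red edge otherwise. A contraction sequence of an $n$-vertex trigraph $G$ is a sequence $\mathcal{P}_n,\dots,\mathcal{P}_1$ of partitions of $V(G)$ where $\mathcal{P}_n$ is the partition into singletons and each $\mathcal{P}_i$ arises from $\mathcal{P}_{i+1}$ by merging two parts. Its width is the maximum red degree over all $G/\mathcal{P}_i$. The twin-width $\operatorname{tww}(G)$ is the minimum width of a contraction sequence of $G$. *)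

(* Defs.v *)
From Stdlib Require Import Reals.
From mathcomp Require Import all_boot.

Set Implicit Arguments.
Unset Strict Implicit.
Unset Printing Implicit Defensive.

Section TwinWidth.
Variables (T : finType) (e : rel T).

(* A simple graph on vertex set T: e symmetric and irreflexive (hypotheses
   of the theorem). *)

Definition degenerate (d : nat) : Prop :=
  exists ord : seq T,
    perm_eq ord (enum T) /\
    forall (p q : seq T) (v : T), ord = p ++ v :: q -> count (e v) p <= d.

Definition singletons : {set {set T}} := [set [set x] | x : T].

Definition merge_step (P Q : {set {set T}}) : bool :=
  [exists U in P, exists W in P,
     (U != W) && (Q == (P :\ U :\ W) :|: [set U :|: W])].

(* Red edge between two parts of the quotient trigraph G/P (G is a graph,
   so all its edges are black): some pair is an edge and not every pair is. *)
Definition red_edge (U W : {set T}) : bool :=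
  [exists u in U, exists w in W, e u w] &&
  ~~ [forall u in U, forall w in W, e u w].

Definition red_degree (P : {set {set T}}) (U : {set T}) : nat :=
  #|[set W in P | (W != U) && red_edge U W]|.

Definition quotient_width (P : {set {set T}}) : nat :=
  \max_(U in P) red_degree P U.

(* A contraction sequence P_n, ..., P_1 is represented by the list
   s = [P_(n-1); ...; P_1] following P_n = singletons: each partition arises
   from the previous one by merging two parts, and the last has (at most,
   i.e. exactly when n >= 1) one part. *)
Definition contraction_seq (s : seq {set {set T}}) : bool :=
  path merge_step singletons s && (#|last singletons s| <= 1).

Definition seq_width (s : seq {set {set T}}) : nat :=
  \max_(P <- singletons :: s) quotient_width P.

Definition tww_le (b : R) : Prop :=
  exists s, contraction_seq s /\ Rle (INR (seq_width s)) b.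

End TwinWidth.

(* Main.v *)
Require Import Defs.
From Stdlib Require Import Reals.
From mathcomp Require Import all_boot.
From mathcomp Require Import zify.
Set Implicit Arguments.
Unset Strict Implicit.
Unset Printing Implicit Defensive.

Fixpoint lab (C : pred nat) (i : nat) : nat :=
  if i is i'.+1 then (if C i'.+1 then i'.+1 else lab C i') else 0.

Lemma lab_le (C : pred nat) i : lab C i <= i.
Proof. elim: i => //= i IH; case: (C i.+1) => //; exact: leqW. Qed.

Lemma lab_cut (C : pred nat) i : (lab C i == 0) || C (lab C i).
Proof. elim: i => //= i IH; case: ifP => // ->; by rewrite orbT. Qed.

Lemma lab_free (C : pred nat) i j : lab C i < j <= i -> ~~ C j.
Proof.
elim: i => [|i IH] /=; first by lia.
case: ifP => Ci.
  by lia.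
case/andP=> h1 h2; rewrite leq_eqVlt in h2; case/orP: h2 => [/eqP->|h2]; first by rewrite Ci.
by apply: IH; rewrite h1.
Qed.

Lemma lab_char (C : pred nat) i k : k <= i -> (k == 0) || C k -> (forall j, k < j <= i -> ~~ C j) -> lab C i = k.
Proof.
elim: i => [|i IH] /=; first by rewrite leqn0 => /eqP.
move=> ki hk hf; case: ifP => Ci.
  rewrite leq_eqVlt in ki; case/orP: ki => [/eqP-> //|ki].
  by move: (hf i.+1); rewrite ki leqnn Ci => /(_ erefl).
rewrite leq_eqVlt in ki; case/orP: ki => [/eqP ki|ki].
  subst k; case/orP: hk => [//|]; by rewrite Ci.
apply: IH => // j /andP[h1 h2]; apply: hf; rewrite h1 /=; exact: leqW.
Qed.

Lemma lab_id (C : pred nat) i : C i -> lab C i = i.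
Proof. by move=> Ci; apply: lab_char => //; [rewrite Ci orbT| lia]. Qed.

Lemma lab_mono (C : pred nat) i j : i <= j -> lab C i <= lab C j.
Proof.
move=> ij; rewrite leqNgt; apply/negP => lt.
have := lab_cut C i; case/orP => [/eqP h|h]; first by rewrite h in lt.
have := @lab_free C j (lab C i); rewrite lt /= (leq_trans (lab_le C i) ij) h; by move/(_ erefl).
Qed.

Lemma eq_lab (C C' : pred nat) : C =1 C' -> lab C =1 lab C'.
Proof. move=> h; elim=> //= i IH; by rewrite h IH. Qed.

Lemma lab_rem (C : pred nat) j i : C j -> 0 < j ->
  lab (fun k => C k && (k != j)) i = if lab C i == j then lab C j.-1 else lab C i.
Proof.
move=> Cj j0; case: ifP => /eqP h.
- apply: lab_char.
  + have := lab_le C j.-1; have := lab_le C i; rewrite h; lia.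
  + have := lab_cut C j.-1; case/orP => [->//|]; rewrite orbC => ->.
    have := lab_le C j.-1; case: (lab C j.-1 =P j) => // ->; case: j j0 {Cj h} => //= j _.
    by rewrite ltnn.
  + move=> k /andP[h1 h2] /=; case: (ltnP j.-1 k) => [h3|h3].
    * case: (k =P j) => [->|/eqP kj]; first by rewrite andbF.
      rewrite andbT; apply: (@lab_free C i); rewrite h2 h andbT; lia.
    * have := @lab_free C j.-1 k; rewrite h1 h3 /=; move/(_ erefl); by move/negbTE->.
- apply: lab_char; first exact: lab_le.
  + have := lab_cut C i; case/orP => [->//|hc]; rewrite hc andTb; apply/orP; right; exact/eqP.
  + move=> k hk; have := lab_free hk; by move/negbTE->.
Qed.

Section Blocks.
Variables (d m : nat).
Definition sz l := m - l %/ d.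
Definition Pf l := \sum_(j < l) sz j.
Definition Pl := map Pf (iota 0 (d * m)).
Definition Sp i := i \in Pl.

Lemma PfS l : Pf l.+1 = Pf l + sz l.
Proof. by rewrite /Pf big_ord_recr. Qed.

Lemma Pf_mono k l : k <= l -> Pf k <= Pf l.
Proof.
elim: l => [|l IH]; first by rewrite leqn0 => /eqP->.
rewrite leq_eqVlt => /orP[/eqP->//|]; rewrite ltnS => /IH h.
by rewrite PfS (leq_trans h) ?leq_addr.
Qed.

Lemma Pf_lt_inv k l : Pf k < Pf l -> k < l.
Proof. rewrite ltnNge => h; rewrite ltnNge; apply: contra h; exact: Pf_mono. Qed.

Lemma sz_pos l : 0 < d -> l < d * m -> 0 < sz l.
Proof. move=> d0 hl; rewrite /sz subn_gt0 ltn_divLR // mulnC //. Qed.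

Lemma Pf_ltS l : 0 < d -> l < d * m -> Pf l < Pf l.+1.
Proof. move=> d0 hl; rewrite PfS -{1}(addn0 (Pf l)) ltn_add2l; exact: sz_pos. Qed.

Lemma Pf_sum k : 0 < d -> k <= m -> 2 * Pf (d * k) = d * k * (2 * m + 1 - k).
Proof.
move=> d0; elim: k => [|k IH] hk; first by rewrite muln0 /Pf big_ord0.
have hk' : k <= m by lia.
have -> : d * k.+1 = d * k + d by rewrite mulnS addnC.
rewrite /Pf -(big_mkord xpredT sz) (big_cat_nat _ (n := d * k)) ?leq_addr //= big_mkord -/(Pf (d * k)).
have -> : \sum_(d * k <= i < d * k + d) sz i = \sum_(d * k <= i < d * k + d) (m - k).
  apply: eq_big_nat => i /andP[h1 h2]; rewrite /sz.
  have -> : i = k * d + (i - d * k) by lia.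
  rewrite divnMDl // divn_small //; lia.
rewrite sum_nat_const_nat mulnDr IH //.
have -> : d * k + d - d * k = d by lia.
have -> : m = k.+1 + (m - k.+1) by lia.
set a := m - k.+1; nia.
Qed.

Lemma Pf_big n : 0 < d -> 2 * n <= d * m * m.+1 -> n <= Pf (d * m).
Proof.
move=> d0 h; have := Pf_sum d0 (leqnn m).
have -> : 2 * m + 1 - m = m.+1 by lia.
move=> h2; lia.
Qed.

Lemma bound_l l : 0 < d -> l < d * m -> l + d * sz l <= d * m + d - 1.
Proof.
move=> d0 hl; rewrite /sz.
have hq : l %/ d < m by rewrite ltn_divLR // mulnC.
have hr : l %% d < d by rewrite ltn_pmod.
have he := divn_eq l d.
set q := l %/ d in hq he *; set r := l %% d in hr he *.
rewrite {1}he; nia.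
Qed.

End Blocks.

Section Parts.
Variables (T : finType) (e : rel T) (u : seq T).
Hypothesis u_uniq : uniq u.
Hypothesis u_all : forall x, x \in u.

Lemma size_u : size u = #|T|.
Proof.
rewrite cardE; apply/eqP; rewrite eqn_leq; apply/andP; split.
  apply: uniq_leq_size => // x _; by rewrite mem_enum.
apply: uniq_leq_size; [exact: enum_uniq | move=> x _; exact: u_all].
Qed.

Definition pos x := index x u.
Lemma pos_lt x : pos x < #|T|.
Proof. by rewrite /pos -size_u index_mem. Qed.
Lemma pos_inj : injective pos.
Proof. move=> x y h; by rewrite -(nth_index x (u_all x)) -/(pos x) h /pos nth_index. Qed.
Lemma pos_surj i : i < #|T| -> exists y, pos y = i.
Proof.
rewrite -size_u => hi; case Hu: u hi => [|x0 s] // hi.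
exists (nth x0 u i); by rewrite /pos index_uniq // Hu.
Qed.

Definition cls (C : pred nat) x := [set y | lab C (pos y) == lab C (pos x)].
Definition Part (C : pred nat) := [set cls C x | x : T].

Lemma cls_eq (C : pred nat) x y : (cls C x == cls C y) = (lab C (pos x) == lab C (pos y)).
Proof.
apply/eqP/eqP => [h|h].
  have : x \in cls C y by rewrite -h inE.
  by rewrite inE => /eqP.
by apply/setP => z; rewrite !inE h.
Qed.

Lemma eq_Part (C C' : pred nat) : C =1 C' -> Part C = Part C'.
Proof.
move=> h; rewrite /Part; apply: eq_imset => x; apply/setP => y.
by rewrite !inE !(eq_lab h).
Qed.

Lemma Part_single (C : pred nat) : (forall i, 0 < i < #|T| -> C i) -> Part C = singletons T.
Proof.
move=> hC; rewrite /Part /singletons; apply: eq_imset => x; apply/setP => y.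
have hl : forall z, lab C (pos z) = pos z.
  move=> z; case h0: (pos z) => [|k]; first by [].
  apply: lab_id; apply: hC; by rewrite -h0 pos_lt andbT h0.
rewrite !inE !hl; apply/eqP/eqP => [/pos_inj|->] //.
Qed.

Lemma Part_one (C : pred nat) : (forall i, 0 < i < #|T| -> ~~ C i) -> #|Part C| <= 1.
Proof.
move=> hC.
have hl : forall z, lab C (pos z) = 0.
  move=> z; apply: lab_char => // j /andP[h1 h2]; apply: hC.
  by rewrite h1 (leq_ltn_trans h2 (pos_lt z)).
case: (pickP T) => [x0 _|h0].
  have sub : Part C \subset [set cls C x0].
    apply/subsetP => W /imsetP[x _ ->]; by rewrite inE cls_eq !hl.
  by rewrite (leq_trans (subset_leq_card sub)) ?cards1.
have sub : Part C \subset set0.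
  apply/subsetP => W /imsetP[x _ _]; by have := h0 x.
by rewrite (leq_trans (subset_leq_card sub)) ?cards0.
Qed.

Lemma merge_Part (C : pred nat) j : C j -> 0 < j < #|T| ->
  merge_step (Part C) (Part (fun i => C i && (i != j))).
Proof.
move=> Cj /andP[j0 jn].
have [y hy] := pos_surj jn.
have [z hz] : exists z, pos z = j.-1 by apply: pos_surj; apply: leq_ltn_trans jn; exact: leq_pred.
set C' := fun i => C i && (i != j).
have ly : lab C (pos y) = j by rewrite hy lab_id.
set b := lab C j.-1.
have lz : lab C (pos z) = b by rewrite hz.
have bj : b < j by have := lab_le C j.-1; rewrite /b; lia.
have hl : forall w, lab C' (pos w) = if lab C (pos w) == j then b else lab C (pos w).
  by move=> w; rewrite /C' lab_rem.
apply/existsP; exists (cls C y); apply/andP; split; first by apply/imsetP; exists y.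
apply/existsP; exists (cls C z); apply/andP; split; first by apply/imsetP; exists z.
rewrite cls_eq ly lz neq_ltn bj orbT /=.
have key : forall x, cls C' x = if (lab C (pos x) == j) || (lab C (pos x) == b)
                                then cls C y :|: cls C z else cls C x.
  move=> x; apply/setP => w.
  case: (lab C (pos x) =P j) => [hxj|/eqP hxj] /=.
    rewrite !inE !hl hxj ly lz eqxx.
    case: (lab C (pos w) =P j) => [->|_]; by rewrite ?eqxx.
  case: (lab C (pos x) =P b) => [hxb|/eqP hxb] /=.
    rewrite !inE !hl hxb ly lz if_same.
    case: (lab C (pos w) =P j) => [->|_]; by rewrite ?eqxx ?orbT.
  rewrite !inE !hl (negbTE hxj).
  case: (lab C (pos w) =P j) => [->|_] //.
  by rewrite eq_sym (negbTE hxb) eq_sym (negbTE hxj).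
apply/eqP/setP => W; rewrite !inE; apply/imsetP/idP.
  case=> x _ ->; rewrite key; case: ifP => hx.
    by rewrite eqxx orbT.
  apply/orP; left; rewrite !cls_eq ly lz; apply/andP; split.
    by apply: contraFN hx => /eqP->; rewrite eqxx orbT.
  apply/andP; split; first by apply: contraFN hx => /eqP->; rewrite eqxx.
  by apply/imsetP; exists x.
case/orP => [/andP[hW1 /andP[hW2 /imsetP[x _ hx]]]|/eqP ->].
  exists x => //; rewrite key; move: hW1 hW2; rewrite hx !cls_eq ly lz.
  by move=> /negbTE -> /negbTE ->.
exists y => //; by rewrite key ly eqxx.
Qed.

Definition Ck (r : seq nat) k := fun i => (0 < i < #|T|) && (i \notin take k r).

Lemma nth_notin_take (r : seq nat) k : uniq r -> k < size r -> nth 0 r k \notin take k r.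
Proof.
move=> ur kr.
have hd : ~~ has (mem (take k r)) (drop k r).
  by move: ur; rewrite -{1}(cat_take_drop k r) cat_uniq => /and3P[].
apply/negP => hin; move/hasP: hd; apply; exists (nth 0 r k) => //.
by rewrite (drop_nth 0 kr) mem_head.
Qed.

Lemma path_Ck (r : seq nat) : uniq r -> all (fun i => 0 < i < #|T|) r ->
  forall l k, k + l = size r ->
  path (@merge_step T) (Part (Ck r k)) [seq Part (Ck r k') | k' <- iota k.+1 l].
Proof.
move=> ur ar; elim=> [|l IH] k hk //=.
have kr : k < size r by lia.
rewrite IH ?addSnnS // andbT.
have -> : Part (Ck r k.+1) = Part (fun i => Ck r k i && (i != nth 0 r k)).
  apply: eq_Part => i; rewrite /Ck (take_nth 0 kr) mem_rcons inE negb_or.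
  by rewrite -!andbA [(i \notin _) && _]andbC.
apply: merge_Part; last by move/allP: ar; apply; exact: mem_nth.
rewrite /Ck nth_notin_take // andbT; by move/allP: ar; apply; exact: mem_nth.
Qed.


Lemma card_ord_pred n (Q : pred nat) : #|[set k : 'I_n | Q k]| = count Q (iota 0 n).
Proof. rewrite cardsE cardE -val_enum_ord count_map /enum_mem size_filter.
rewrite (@eq_filter _ _ predT) // filter_predT; exact: eq_count. Qed.

Lemma count_iota_le n (Q : pred nat) (t : seq nat) :
  (forall i, i < n -> Q i -> i \in t) -> count Q (iota 0 n) <= size t.
Proof.
move=> h; rewrite -size_filter; apply: uniq_leq_size; first by rewrite filter_uniq // iota_uniq.
move=> i; rewrite mem_filter mem_iota => /andP[q /andP[_ lt]]; exact: h.
Qed.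

Definition posO x : 'I_#|T| := Ordinal (pos_lt x).

Lemma card_pos_le (A : {set T}) (Q : pred nat) :
  (forall y, y \in A -> Q (pos y)) -> #|A| <= count Q (iota 0 #|T|).
Proof.
move=> h; rewrite -card_ord_pred -(card_imset A (f := posO)); last first.
  by move=> a b /(congr1 val) /= /pos_inj.
apply: subset_leq_card; apply/subsetP => k /imsetP[y hy ->]; rewrite inE /=; exact: h.
Qed.

Definition labO (C : pred nat) x : 'I_#|T| := Ordinal (leq_ltn_trans (lab_le C (pos x)) (pos_lt x)).

Lemma card_cls_le (C : pred nat) (Y : {pred T}) (Q : pred nat) :
  (forall y, y \in Y -> Q (lab C (pos y))) ->
  #|[set cls C y | y in Y]| <= count Q (iota 0 #|T|).
Proof.
move=> h; rewrite -card_ord_pred.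
pose f (k : 'I_#|T|) := [set z | lab C (pos z) == val k].
have -> : [set cls C y | y in Y] = [set f k | k in [set labO C y | y in Y]].
  by rewrite -imset_comp; apply: eq_imset => y; apply/setP => z; rewrite !inE.
apply: leq_trans (leq_imset_card _ _) _.
apply: subset_leq_card; apply/subsetP => k /imsetP[y hy ->]; rewrite inE /=; exact: h.
Qed.

Lemma red_single x y : red_edge e [set x] [set y] = false.
Proof.
apply/negP => /andP[/existsP[a /andP[/set1P -> /existsP[b /andP[/set1P -> hab]]]] /negP]; apply.
apply/forallP => a'; apply/implyP => /set1P ->; apply/forallP => b'; apply/implyP => /set1P ->.
exact: hab.
Qed.

Variable d : nat.
Hypothesis hdeg : forall v, #|[set w | e v w && (pos v < pos w)]| <= d.

Definition Fw (U : {set T}) := [set w | [exists v in U, e v w && (pos v < pos w)]].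

Lemma card_Fw U : #|Fw U| <= #|U| * d.
Proof.
have -> : Fw U = \bigcup_(v in U) [set w | e v w && (pos v < pos w)].
  apply/setP => w; rewrite inE; apply/existsP/bigcupP => [[v /andP[hv h]]|[v hv]].
    by exists v => //; rewrite inE.
  by rewrite inE => h; exists v; rewrite hv.
rewrite -sum_nat_const.
apply: (big_rec2 (fun (A : {set T}) n => #|A| <= n)); first by rewrite cards0.
move=> v A n _ hA; rewrite cardsU; apply: leq_trans (leq_subr _ _) _; exact: leq_add.
Qed.

Lemma red_split (C : pred nat) x :
  #|[set W in Part C | (W != cls C x) && red_edge e (cls C x) W]| <=
  #|[set cls C y | y in [set y | lab C (pos y) < lab C (pos x)]]| + #|cls C x| * d.
Proof.
set E := [set cls C y | y in _].
apply: leq_trans (_ : #|E :|: [set cls C w | w in Fw (cls C x)]| <= _).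
  apply: subset_leq_card; apply/subsetP => W; rewrite inE => /andP[/imsetP[y _ ->]].
  case/andP => hne /andP[/existsP[u0 /andP[hu0 /existsP[w0 /andP[hw0 huw]]]] _].
  move: hne; rewrite cls_eq => hne.
  move: hu0 hw0; rewrite !inE => /eqP hu0 /eqP hw0.
  case: (ltngtP (lab C (pos y)) (lab C (pos x))) => [hlt|hgt|heq]; last by rewrite heq eqxx in hne.
    by apply/orP; left; apply/imsetP; exists y => //; rewrite inE.
  apply/orP; right; apply/imsetP; exists w0; last by apply/eqP; rewrite cls_eq hw0.
  rewrite inE; apply/existsP; exists u0; rewrite inE hu0 eqxx huw /=.
  rewrite ltnNge; apply/negP => /(lab_mono C); rewrite hu0 hw0; lia.
rewrite cardsU; apply: leq_trans (leq_subr _ _) _; rewrite leq_add2l.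
apply: leq_trans (leq_imset_card _ _) _; exact: card_Fw.
Qed.


Variable m : nat.
Hypothesis d0 : 0 < d.
Hypothesis m0 : 0 < m.
Hypothesis hnm : 2 * #|T| <= d * m * m.+1.

Let Wd := d * m + d - 1.

Lemma Sp0 : Sp d m 0.
Proof.
apply/mapP; exists 0; last by rewrite /Pf big_ord0.
by rewrite mem_iota add0n muln_gt0 d0 m0.
Qed.

Lemma count_Sp : count (Sp d m) (iota 0 #|T|) <= d * m.
Proof.
by rewrite -[d * m](size_iota 0) -(size_map (Pf d m)); apply: count_iota_le.
Qed.

Lemma count_Sp_lt l : l <= d * m ->
  count (fun i => Sp d m i && (i < Pf d m l)) (iota 0 #|T|) <= l.
Proof.
move=> hl; rewrite -[l in _ <= l](size_iota 0) -(size_map (Pf d m)); apply: count_iota_le.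
move=> i _ /andP[/mapP[k _ ->] hk]; apply: map_f; rewrite mem_iota add0n.
exact: Pf_lt_inv hk.
Qed.

Lemma count_blk l : count (fun i => Pf d m l <= i < Pf d m l.+1) (iota 0 #|T|) <= sz d m l.
Proof.
rewrite -[sz d m l](size_iota (Pf d m l)); apply: count_iota_le.
by move=> i _; rewrite mem_iota -PfS.
Qed.

Lemma width1 (C : pred nat) t :
  (forall i, i < #|T| -> C i = (0 < i) && (Sp d m i || (t < i))) ->
  forall U, U \in Part C -> red_degree e (Part C) U <= Wd.
Proof.
move=> hC U /imsetP[x _ ->]; rewrite /red_degree.
have labSp : forall y, lab C (pos y) <= t -> Sp d m (lab C (pos y)).
  move=> y hy; case/orP: (lab_cut C (pos y)) => [/eqP->|hc]; first exact: Sp0.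
  have hlt : lab C (pos y) < #|T| := leq_ltn_trans (lab_le _ _) (pos_lt y).
  move: hc; rewrite hC // => /andP[_ /orP[//|ht]]; lia.
have tail : forall y, t < lab C (pos y) -> cls C y = [set y].
  move=> y hy; apply/setP => z; rewrite !inE; apply/eqP/eqP => [hz|->//].
  apply: pos_inj.
  have key : forall w, lab C (pos w) = lab C (pos y) -> pos w = lab C (pos y).
    move=> w hw; apply/eqP; rewrite eqn_leq -{2}hw lab_le andbT leqNgt; apply/negP => hlt.
    have := @lab_free C (pos w) (pos w); rewrite hw hlt leqnn /= hC ?pos_lt //.
    move/(_ isT)/negP; apply; apply/andP; split; [lia | apply/orP; right; lia].
  by rewrite (key z hz); symmetry; apply: key.
case: (leqP (lab C (pos x)) t) => hat.
- have [l hl hal] : exists2 l, l < d * m & lab C (pos x) = Pf d m l.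
    have := labSp x hat; case/mapP => l; rewrite mem_iota add0n => hl ->; by exists l.
  apply: leq_trans (red_split C x) _.
  have h1 : #|[set cls C y | y in [set y | lab C (pos y) < lab C (pos x)]]| <= l.
    apply: leq_trans (count_Sp_lt (ltnW hl)).
    apply: card_cls_le => y; rewrite inE => hy; rewrite -hal hy andbT.
    apply: labSp; exact: leq_trans (ltnW hy) hat.
  have h2 : #|cls C x| <= sz d m l.
    apply: leq_trans (count_blk l).
    apply: card_pos_le => y; rewrite inE => /eqP hy.
    have ge : Pf d m l <= pos y by rewrite -hal -hy lab_le.
    rewrite ge /= ltnNge; apply/negP => hle.
    case: (ltnP l.+1 (d * m)) => hl1.
      have hCl : C (Pf d m l.+1).
        rewrite hC; last by apply: leq_ltn_trans hle (pos_lt y).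
        have := Pf_ltS d0 hl; rewrite (_ : Sp d m (Pf d m l.+1)) ?orbT ?andbT; first lia.
        by apply: map_f; rewrite mem_iota add0n.
      have := @lab_free C (pos y) (Pf d m l.+1); rewrite hy hal Pf_ltS // hle hCl.
      by move/(_ erefl).
    have : #|T| <= Pf d m (d * m) by apply: Pf_big.
    have := pos_lt y; have -> : d * m = l.+1 by lia.
    lia.
  have := bound_l d0 hl; rewrite mulnC in h2 *.
  have := leq_mul (leqnn d) h2; lia.
- rewrite (tail x hat).
  apply: leq_trans (_ : #|[set cls C y | y in [set y | lab C (pos y) <= t]]| <= _).
    apply: subset_leq_card; apply/subsetP => W; rewrite inE => /andP[/imsetP[y _ ->]].
    case/andP => _ hred; apply/imsetP; exists y => //; rewrite inE leqNgt; apply/negP => hy.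
    by rewrite (tail y hy) red_single in hred.
  apply: leq_trans (_ : count (Sp d m) (iota 0 #|T|) <= _).
    apply: card_cls_le => y; rewrite inE; exact: labSp.
  apply: leq_trans count_Sp _; lia.
Qed.

Lemma width2 (C : pred nat) :
  (forall i, C i -> Sp d m i) ->
  forall U, U \in Part C -> red_degree e (Part C) U <= Wd.
Proof.
move=> hC U hU; rewrite /red_degree.
apply: leq_trans (_ : #|Part C :\ U| <= _).
  apply: subset_leq_card; apply/subsetP => W; rewrite !inE => /andP[hW /andP[-> _]] //.
have : #|Part C| <= d * m.
  apply: leq_trans count_Sp; apply: card_cls_le => y _.
  case/orP: (lab_cut C (pos y)) => [/eqP->|]; [exact: Sp0 | exact: hC].
rewrite (cardsD1 U) hU; lia.
Qed.

End Parts.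

Lemma last_iota1 N : last 0 (iota 1 N) = N.
Proof. case: N => // N; by rewrite -[N.+1]addn1 iotaD last_cat /= addnC. Qed.

Lemma take_filter (p : pred nat) (s : seq nat) k :
  exists j, take k (filter p s) = filter p (take j s).
Proof.
elim: s k => [|x s IH] k; first by exists 0; rewrite take0.
case: k => [|k]; first by exists 0; rewrite take0.
have [j hj] := IH k; have [j' hj'] := IH k.+1.
rewrite /=; case hpx: (p x).
  by exists j.+1; rewrite /= hpx hj.
by exists j'.+1; rewrite /= hpx hj'.
Qed.

Section Final.
Variables (T : finType) (u : seq T).
Hypothesis u_uniq : uniq u.
Hypothesis u_all : forall x, x \in u.

Lemma cseq_of (r : seq nat) : uniq r -> all (fun i => 0 < i < #|T|) r ->
  (forall i, 0 < i < #|T| -> i \in r) ->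
  contraction_seq [seq Part u (Ck T r k) | k <- iota 1 (size r)].
Proof.
move=> ur ar hr.
have hs : singletons T = Part u (Ck T r 0).
  by symmetry; apply: Part_single => // i hi; rewrite /Ck take0 hi.
rewrite /contraction_seq hs; apply/andP; split.
  exact: (path_Ck u_uniq u_all ur ar (k := 0)).
rewrite (last_map (fun k => Part u (Ck T r k)) _ 0) last_iota1; apply: Part_one => // i hi.
by rewrite /Ck take_size hr // hi.
Qed.

Lemma seq_width_le (e : rel T) (r : seq nat) w :
  (forall k, k <= size r -> forall U, U \in Part u (Ck T r k) ->
     red_degree e (Part u (Ck T r k)) U <= w) ->
  seq_width e [seq Part u (Ck T r k) | k <- iota 1 (size r)] <= w.
Proof.
move=> h.
have hs : singletons T = Part u (Ck T r 0).
  by symmetry; apply: Part_single => // i hi; rewrite /Ck take0 hi.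
rewrite /seq_width hs.
have -> : Part u (Ck T r 0) :: [seq Part u (Ck T r k) | k <- iota 1 (size r)]
        = [seq Part u (Ck T r k) | k <- iota 0 (size r).+1] by [].
rewrite big_map big_seq; apply: (big_ind (fun x => x <= w)) => //.
  by move=> a b ha hb; rewrite geq_max ha hb.
move=> k; rewrite mem_iota add0n ltnS => hk.
apply/bigmax_leqP => U hU; exact: h.
Qed.

End Final.

Theorem mainTheorem4 (T : finType) (e : rel T) (d : nat) :
  symmetric e -> irreflexive e -> degenerate e d ->
  tww_le e (Rplus (sqrt (INR (2 * d * #|T|))) (INR (2 * d))).
Proof.
move=> esym eirr [ord [hperm hdg]].
set n := #|T|.
set u := rev ord.
have u_uniq : uniq u by rewrite rev_uniq (perm_uniq hperm) enum_uniq.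
have u_all : forall x, x \in u by move=> x; rewrite mem_rev (perm_mem hperm) mem_enum.
have fdeg : forall v, #|[set w | e v w && (pos u v < pos u w)]| <= d.
  move=> v; set i := pos u v.
  have hu : u = take i u ++ v :: drop i.+1 u.
    by rewrite -{1}(cat_take_drop i u) (drop_nth v) /i /pos ?index_mem ?nth_index.
  have hord : ord = rev (drop i.+1 u) ++ v :: rev (take i u).
    by rewrite -[ord]revK -/u {1}hu rev_cat rev_cons cat_rcons.
  have := hdg _ _ _ hord; rewrite count_rev => hc.
  apply: leq_trans hc; rewrite -size_filter.
  apply: leq_trans (card_size _).
  apply: subset_leq_card; apply/subsetP => w; rewrite inE => /andP[hvw hlt].
  rewrite mem_filter hvw /=.
  have : w \in take i.+1 u ++ drop i.+1 u by rewrite cat_take_drop.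
  rewrite mem_cat => /orP[hw|//].
  have : pos u w = index w (take i.+1 u ++ drop i.+1 u) by rewrite cat_take_drop.
  rewrite index_cat hw => hpw.
  have := index_mem w (take i.+1 u); rewrite hw size_take.
  have hi : i < size u by rewrite /i /pos index_mem.
  move: hlt; rewrite -/i hpw; case: ifP => hs h1 h2; exfalso; lia.
case: (posnP d) => [d0|d0].
-
  have noe : forall x y, e x y = false.
    move=> x y; apply/negP => hxy.
    have hne : pos u x != pos u y.
      apply/negP => /eqP /(pos_inj u_all) hxy'; by rewrite hxy' eirr in hxy.
    case: (ltngtP (pos u x) (pos u y)) => [h|h|h]; last by rewrite h eqxx in hne.
      have := fdeg x; rewrite d0 leqn0 cards_eq0 => /eqP /setP /(_ y).
      by rewrite !inE hxy h.
    have := fdeg y; rewrite d0 leqn0 cards_eq0 => /eqP /setP /(_ x).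
    by rewrite !inE esym hxy h.
  set r := iota 1 n.-1.
  exists [seq Part u (Ck T r k) | k <- iota 1 (size r)]; split.
    apply: cseq_of => //; first exact: iota_uniq.
      by apply/allP => i; rewrite mem_iota; lia.
    by move=> i; rewrite mem_iota; lia.
  apply: (@Rle_trans _ (INR 0)); last first.
    by rewrite d0 /=; apply: Rplus_le_le_0_compat; [exact: sqrt_pos | apply: Rle_refl].
  apply: le_INR; apply/leP; rewrite leqn0; apply/eqP/anti_leq/andP; split => //.
  apply: seq_width_le => // k _ U _; rewrite leqn0 cards_eq0; apply/eqP/setP => W.
  rewrite !inE /red_edge; case: [exists _ in _, _] / existsP => [[a /andP[_ /existsP[b /andP[_]]]]|].
    by rewrite noe.
  by rewrite !andbF.
- have exm : exists m, (0 < m) && (2 * n <= d * m * m.+1).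
    exists n.+1; apply/andP; split => //; nia.
  case: (ex_minnP exm) => m /andP[m0 hm] hmin.
  set s0 := iota 1 n.-1.
  set nonS := [seq i <- s0 | ~~ Sp d m i].
  set Sl := [seq i <- s0 | Sp d m i].
  set r := nonS ++ Sl.
  have mem_s0 : forall i, (i \in s0) = (0 < i < n).
    move=> i; rewrite mem_iota; apply/idP/idP; lia.
  have mem_r : forall i, (i \in r) = (0 < i < n).
    move=> i; rewrite mem_cat !mem_filter mem_s0; by case: (Sp d m i) => /=; rewrite ?orbF.
  have ur : uniq r.
    rewrite cat_uniq !filter_uniq ?iota_uniq //= andbT; apply/hasPn => i.
    by rewrite !mem_filter => /andP[-> _].
  exists [seq Part u (Ck T r k) | k <- iota 1 (size r)]; split.
    apply: cseq_of => //; first by apply/allP => i; rewrite mem_r.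
    by move=> i; rewrite mem_r.
  apply: (@Rle_trans _ (INR (d * m + d - 1))).
    apply: le_INR; apply/leP; apply: seq_width_le => // k hk U hU.
    case: (leqP k (size nonS)) => hkn.
      have [j hj] := take_filter (predC (Sp d m)) s0 k.
      apply: (width1 u_uniq u_all fdeg d0 m0 hm (t := minn j n.-1)) hU => i hi.
      rewrite /Ck /r takel_cat // hj take_iota mem_filter mem_iota /=.
      rewrite /n in hi *.
      rewrite hi andbT; case: (Sp d m i) => /=; rewrite ?andbT //.
      by case: (posnP i) => [->|ip] //=; rewrite add1n ltnS -ltnNge.
    apply: (width2 e u_uniq u_all d0 m0 hm) hU => i.
    rewrite /Ck /r take_cat (leq_gtF (ltnW hkn)) mem_cat negb_or => /andP[hi /andP[hn _]].
    move: hn; rewrite mem_filter mem_s0 hi andbT; by case: (Sp d m i).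
  set X := d * m.-1.
  have hX : X * X <= 2 * d * n.
    rewrite /X; case: (posnP m.-1) => [->|hm1]; first by rewrite muln0.
    have h : ~~ (2 * n <= d * m.-1 * m.-1.+1).
      apply/negP => h; have := hmin m.-1; rewrite hm1 h => /(_ isT); lia.
    have e1 : m.-1.+1 = m by lia.
    rewrite e1 -ltnNge in h.
    move: h hm1; rewrite /n; set a := m.-1; set N := #|T|; move=> h hm1.
    have : d * a * (d * a) <= d * a * (d * m) by apply: leq_mul => //; apply: leq_mul => //; lia.
    nia.
  have hW : d * m + d - 1 <= X + 2 * d.
    rewrite /X; have em : m = m.-1.+1 by lia.
    rewrite {1}em mulnS; lia.
  apply: (@Rle_trans _ (INR (X + 2 * d))); first by apply: le_INR; apply/leP.
  rewrite plus_INR; apply: Rplus_le_compat_r.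
  rewrite -(sqrt_square (INR X)); last exact: pos_INR.
  apply: sqrt_le_1_alt; rewrite -mult_INR; apply: le_INR; apply/leP; exact: hX.
Qed.
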